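(* For every $l\in\mathbb N$, the curve $\Gamma_l=\{P_l(\lambda,\mu^2)=0\}$ intersects the line $\{\mu=0\}$ (in the projective plane containing $\mathbb C^2_{(\lambda,\mu)}$) exactly at the points with $\lambda$-abscissas $0,\ 1\cdot(l-1),\ 2(l-2),\ \dots,\ (l-1)\cdot 1$. All these intersection points are singular points of $\Gamma_l$, except for the points with abscissas $0$ and $\frac{l^2}{4}$ (the latter only when $l$ is even), which are regular points of $\Gamma_l$ at which $\Gamma_l$ intersects the line $\{\mu=0\}$ orthogonally.
   Context: For $l\in\mathbb N$ and $\mu\in\mathbb C$, $H_l$ is the tridiagonal $l\times l$ matrix with entries $H_{l;jj}=(1-j)(l-j+1)$, $H_{l;j,j+1}=\mu j$, $H_{l;j,j-1}=\mu(l-j+1)$, and $H_{l;ij}=0$ if $|i-j|\geq 2$; $\det(H_l+\lambda\,\mathrm{Id})$ is a polynomial of degree $l$ in $(\lambda,\mu^2)$, written $P_l(\lambda,\mu^2)$. *)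

(* Defs.v *)
From HB Require Import structures.
From mathcomp Require Import all_boot all_order all_algebra.
From mathcomp Require Import polyXY.
Set Implicit Arguments. Unset Strict Implicit. Unset Printing Implicit Defensive.
Import Order.TTheory GRing.Theory Num.Theory.
Local Open Scope ring_scope.

(* The l x l tridiagonal matrix H_l(mu).  Row/column index i : 'I_l
   corresponds to the paper's index j = i+1 (paper indices run 1..l). *)
Definition Hmat (R : comNzRingType) (l : nat) (mu : R) : 'M[R]_l :=
  \matrix_(i < l, j < l)
    let a : R := (i.+1)%:R in
    if i == j then (1 - a) * (l%:R - a + 1)
    else if (j : nat) == i.+1 then mu * a
    else if (i : nat) == j.+1 then mu * (l%:R - a + 1)
    else 0.

(* F_l(lambda, mu) = det(H_l(mu) + lambda Id) = P_l(lambda, mu^2), as a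
   bivariate polynomial: outer variable 'X is lambda, inner variable
   'Y = 'X%:P is mu.  Evaluation at (a, b) is F.[a, b]. *)
Definition Fl (C : numClosedFieldType) (l : nat) : {poly {poly C}} :=
  \det (Hmat l 'Y + 'X%:M).

Definition dlambda (C : fieldType) (F : {poly {poly C}}) : {poly {poly C}} :=
  F^`().
Definition dmu (C : fieldType) (F : {poly {poly C}}) : {poly {poly C}} :=
  map_poly (@deriv C) F.

Definition deg_term (C : fieldType) (F : {poly {poly C}}) (i : nat) : nat :=
  if F`_i != 0 then addn i (size F`_i).-1 else 0%N.
Definition tdeg (C : fieldType) (F : {poly {poly C}}) : nat :=
  \max_(i < size F) deg_term F i.

(* value at the homogeneous coordinates [x : y : z] of the homogenization
   z^d F(x/z, y/z) of F, d = total degree; its zero set is the projective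
   closure of the affine curve {F = 0} *)
Definition hom_eval (C : fieldType) (F : {poly {poly C}}) (x y z : C) : C :=
  \sum_(i < size F) \sum_(j < size F`_i)
     F`_i`_j * x ^+ i * y ^+ j * z ^+ (tdeg F - (i + j)).

Definition on_curve (C : fieldType) (F : {poly {poly C}}) (a b : C) : Prop :=
  F.[a, b] = 0.

Definition singular_pt (C : fieldType) (F : {poly {poly C}}) (a b : C) : Prop :=
  [/\ F.[a, b] = 0, (dlambda F).[a, b] = 0 & (dmu F).[a, b] = 0].

Definition regular_pt (C : fieldType) (F : {poly {poly C}}) (a b : C) : Prop :=
  F.[a, b] = 0 /\ ~ singular_pt F a b.

(* at a regular point (a,b) the tangent line of {F = 0} has direction
   vector (- dF/dmu, dF/dlambda); it is orthogonal to the line {mu = 0}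
   (direction (1,0)) iff the dot product of the directions vanishes *)
Definition meets_mu0_orthogonally (C : fieldType) (F : {poly {poly C}}) (a : C)
  : Prop :=
  regular_pt F a 0 /\ (- (dmu F).[a, 0]) * 1 + (dlambda F).[a, 0] * 0 = 0.

(* Main.v *)
Require Import Defs.
From HB Require Import structures.
From mathcomp Require Import all_boot all_order all_algebra.
From mathcomp Require Import polyXY.
From mathcomp Require Import fingroup perm.
From mathcomp Require Import ring lra zify.
Set Implicit Arguments. Unset Strict Implicit.
Import Order.TTheory GRing.Theory Num.Theory.
Local Open Scope ring_scope.

Lemma sign_sq (R : comNzRingType) (i : nat) : (-1) ^+ i * (-1) ^+ i = 1 :> R.
Proof. by rewrite -exprD -signr_odd oddD addbb. Qed.

Lemma Hmat_sym (R : comNzRingType) l (mu x : R) :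
  \det (Hmat l (- mu) + x%:M) = \det (Hmat l mu + x%:M).
Proof.
pose D : 'M[R]_l := diag_mx (\row_(i < l) (-1) ^+ i).
have E : D *m (Hmat l mu + x%:M) *m D = Hmat l (- mu) + x%:M.
  apply/matrixP => i j; rewrite mul_mx_diag mul_diag_mx !mxE /=.
  have si := sign_sq R i; have sj := sign_sq R j.
  case: (eqVneq i j) => [<-|nij].
    by rewrite mulrAC si mul1r.
  rewrite /= ?mulr0n ?addr0.
  case: eqP => [->|_] /=.
    rewrite exprS; set s := (-1) ^+ i.
    transitivity (- (s * s) * (mu * (i.+1)%:R)); first by ring.
    by rewrite si; ring.
  case: eqP => [->|_] /=; last by rewrite mulr0 mul0r.
  rewrite exprS; set s := (-1) ^+ j.
  transitivity (- (s * s) * (mu * (l%:R - (j.+2)%:R + 1))); first by ring.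
  by rewrite sj; ring.
rewrite -E !det_mulmx mulrAC -det_mulmx.
suff -> : D *m D = 1%:M by rewrite det1 mul1r.
apply/matrixP => i j; rewrite mul_mx_diag !mxE.
case: (eqVneq i j) => [<-|nij]; first by rewrite /= sign_sq.
by rewrite /= ?mulr0n ?mul0r ?mulr0.
Qed.

Section TD.
Variable C : comNzRingType.
Definition tdle (n : nat) (F : {poly {poly C}}) :=
  forall i j, (n < i + j)%N -> F`_i`_j = 0.

Lemma tdle_mono m n F : (m <= n)%N -> tdle m F -> tdle n F.
Proof. by move=> mn h i j ij; apply: h; lia. Qed.

Lemma tdle0 n : tdle n 0.
Proof. by move=> i j _; rewrite coef0 coef0. Qed.

Lemma tdleD n F G : tdle n F -> tdle n G -> tdle n (F + G).
Proof. by move=> hF hG i j ij; rewrite !coefD hF ?hG ?addr0. Qed.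

Lemma tdleN n F : tdle n F -> tdle n (- F).
Proof. by move=> hF i j ij; rewrite !coefN hF ?oppr0. Qed.

Lemma tdleMn n F k : tdle n F -> tdle n (F *+ k).
Proof. by move=> hF i j ij; rewrite !coefMn hF ?mul0rn. Qed.

Lemma tdleM m n F G : tdle m F -> tdle n G -> tdle (m + n) (F * G).
Proof.
move=> hF hG i j ij; rewrite coefM coef_sum big1 // => [[k hk]] _ /=.
rewrite coefM big1 // => [[e he]] _ /=.
case: (leqP (k + e) m) => H.
  by rewrite (hG (i - k)%N (j - e)%N) ?mulr0 //; lia.
by rewrite hF ?mul0r.
Qed.

Lemma tdle1 : tdle 0 1.
Proof.
move=> i j ij; rewrite coef1; case: i ij => [|i] ij /=; last by rewrite coef0.
by rewrite coef1; case: j ij.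
Qed.

Lemma tdleX : tdle 1 'X.
Proof.
move=> i j ij; rewrite coefX; case: eqP => [ei|_]; last by rewrite coef0.
by rewrite coef1; case: j ij; [lia|].
Qed.

Lemma tdleY : tdle 1 'Y.
Proof.
move=> i j ij; rewrite coefC; case: eqP => [ei|_]; last by rewrite coef0.
by rewrite coefX; case: j ij => [|[|j]]; [lia|lia|].
Qed.

Lemma tdle_nat n k : tdle n k%:R.
Proof. by apply: (tdle_mono (leq0n n)); apply: tdleMn; apply: tdle1. Qed.

Lemma tdle_prod (I : Type) (r : seq I) (f : I -> {poly {poly C}}) :
  (forall i, tdle 1 (f i)) -> tdle (size r) (\prod_(i <- r) f i).
Proof.
move=> hf; elim: r => [|a r IH]; first by rewrite big_nil; apply: tdle1.
by rewrite big_cons; apply: (tdleM (hf a) IH).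
Qed.

Lemma tdle_det l (A : 'M[{poly {poly C}}]_l) :
  (forall i j, tdle 1 (A i j)) -> tdle l (\det A).
Proof.
move=> hA; rewrite /determinant; apply: big_ind; [exact: tdle0|exact: tdleD|].
move=> s _; apply: (tdleM (m:=0) (n:=l)).
  by case: (perm.odd_perm s); rewrite ?expr1 ?expr0; [apply: tdleN|]; apply: tdle1.
have := @tdle_prod _ (index_enum 'I_l) (fun i => A i (s i)) (fun i => hA _ _).
by rewrite /index_enum -enumT size_enum_ord.
Qed.
End TD.

Lemma map_Hmat (R S : comNzRingType) (f : {rmorphism R -> S}) l mu :
  map_mx f (Hmat l mu) = Hmat l (f mu).
Proof.
apply/matrixP => i j; rewrite !mxE /=.
by case: ifP => _; [|case: ifP => _; [|case: ifP => _]];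
  rewrite ?(rmorphM, rmorphB, rmorphD, rmorph_nat, rmorph1, rmorph0).
Qed.

Section Main.
Variable C : numClosedFieldType.
Variable l : nat.
Definition rr (k : nat) : C := k%:R * (l%:R - k%:R).
Definition G : {poly C} := map_poly (horner_eval (0:C)) (Fl C l).

Lemma G_prod : G = \prod_(i < l) ('X - (rr i)%:P).
Proof.
rewrite /G /Fl -det_map_mx.
rewrite (_ : map_mx _ _ = diag_mx (\row_(i < l) ('X - (rr i)%:P))).
  by rewrite det_diag; apply: eq_bigr => i _; rewrite mxE.
apply/matrixP => i j; rewrite !mxE /=.
have hY : map_poly (horner_eval (0:C)) ('Y : {poly {poly C}}) = 0.
  by rewrite map_polyC /= horner_evalE hornerX.
have [eij|nij] := eqVneq i j.
  subst j => /=.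
  have hX : map_poly (horner_eval (0:C)) ('X : {poly {poly C}}) = 'X by rewrite map_polyX.
  rewrite !mulr1n rmorphD /= hX !(rmorphD, rmorphM, rmorphN, rmorph_nat, rmorph1).
  rewrite /rr ?(rmorphM, rmorphB, rmorph_nat) -!natr1; ring.
rewrite rmorphD /= !mulr0n rmorph0 addr0.
case: ifP => _; first by rewrite rmorphM /= hY mul0r.
case: ifP => _; first by rewrite rmorphM /= hY mul0r.
by rewrite rmorph0.
Qed.

Lemma tdle_F : tdle l (Fl C l).
Proof.
apply: tdle_det => i j; rewrite !mxE /=.
apply: tdleD; last by apply: tdleMn; apply: tdleX.
have hc : forall n, tdle 0 (n%:R : {poly {poly C}}) by move=> n; apply: tdle_nat.
case: ifP => _.
  apply: (tdle_mono (m:=0)) => //; apply: (tdleM (m:=0) (n:=0)).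
    by apply: tdleD; [apply: tdle1 | apply: tdleN].
  by apply: tdleD; [apply: tdleD; [|apply: tdleN]|apply: tdle1].
case: ifP => _; first by apply: (tdleM (m:=1) (n:=0)); [apply: tdleY|].
case: ifP => _; last exact: tdle0.
apply: (tdleM (m:=1) (n:=0)); first exact: tdleY.
by apply: tdleD; [apply: tdleD; [|apply: tdleN]|apply: tdle1].
Qed.

Lemma coefG i : G`_i = (Fl C l)`_i`_0.
Proof. by rewrite coef_map /= horner_evalE horner_coef0. Qed.

Lemma sizeG : size G = l.+1.
Proof. by rewrite G_prod size_prod_XsubC /index_enum -enumT size_enum_ord. Qed.

Lemma leadG : G`_l = 1.
Proof.
have := lead_coef_prod_XsubC (index_enum 'I_l) predT rr.
by rewrite -G_prod /lead_coef sizeG.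
Qed.


Let F := Fl C l.

Lemma size_F : size F = l.+1.
Proof.
apply/eqP; rewrite eqn_leq; apply/andP; split.
  apply/leq_sizeP => j hj; apply/polyP => k; rewrite coef0; apply: tdle_F; lia.
have e : F`_l`_0 = 1 by rewrite -coefG leadG.
rewrite ltnNge; apply/negP => h; move: e; rewrite (nth_default _ h) coef0 => /eqP.
by rewrite eq_sym oner_eq0.
Qed.

Lemma tdeg_F : tdeg F = l.
Proof.
rewrite /tdeg size_F; apply/eqP; rewrite eqn_leq; apply/andP; split.
  apply/bigmax_leqP => [[i hi]] _ /=; rewrite /deg_term; case: ifP => // nz.
  rewrite leqNgt; apply/negP => h.
  have : lead_coef F`_i != 0 by rewrite lead_coef_eq0.
  by rewrite /lead_coef tdle_F ?eqxx.
apply: leq_trans (leq_bigmax_cond (Ordinal (ltnSn l)) (erefl true)) => /=.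
rewrite /deg_term; have e : F`_l`_0 = 1 by rewrite -coefG leadG.
have -> : F`_l != 0 by apply/eqP => h; move: e; rewrite h coef0 => /eqP; rewrite eq_sym oner_eq0.
exact: leq_addr.
Qed.

Lemma sum_y0 (p : {poly C}) (b : C) (f : nat -> C) :
  \sum_(j < size p) p`_j * b * 0 ^+ j * f j = p`_0 * b * f 0.
Proof.
case: (posnP (size p)) => [e|pos].
  by rewrite e big_ord0; move/eqP: e; rewrite size_poly_eq0 => /eqP ->; rewrite coef0 !mul0r.
rewrite -(prednK pos) big_ord_recl big1 ?addr0 ?expr0 ?mulr1 // => i _.
by rewrite expr0n /= mulr0 mul0r.
Qed.

Lemma hom_eval_y0 x z :
  hom_eval F x 0 z = \sum_(i < l.+1) G`_i * x ^+ i * z ^+ (l - i).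
Proof.
rewrite /hom_eval tdeg_F size_F; apply: eq_bigr => i _.
by rewrite (sum_y0 _ _ (fun j => z ^+ (l - (i + j)))) addn0 coefG.
Qed.

Lemma FeqG a : F.[a, 0] = G.[a].
Proof.
have := horner_map (horner_eval (0:C)) F a%:P.
by rewrite /= horner_evalE hornerC => ->.
Qed.

Lemma dlam a : (dlambda F).[a, 0] = G^`().[a].
Proof.
have := horner_map (horner_eval (0:C)) F^`() a%:P.
rewrite /= horner_evalE hornerC /G -deriv_map => h; symmetry; exact: h.
Qed.


Lemma F_even : map_poly (comp_poly (- 'X : {poly C})) F = F.
Proof.
have hX : map_poly (comp_poly (- 'X : {poly C})) ('X : {poly {poly C}}) = 'X.
  by rewrite map_polyX.
have hY : map_poly (comp_poly (- 'X : {poly C})) ('Y : {poly {poly C}}) = - 'Y.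
  by rewrite map_polyC /= comp_polyX polyCN.
rewrite /F /Fl -det_map_mx map_mxD map_Hmat map_scalar_mx /= hX hY.
exact: Hmat_sym.
Qed.

Lemma dmu0 a : (dmu F).[a, 0] = 0.
Proof.
have key : forall i, (F`_i)^`().[0] = 0.
  move=> i; set p := F`_i.
  have hp : p \Po (- 'X) = p.
    by move: F_even => /(congr1 (fun q : {poly {poly C}} => q`_i)); rewrite coef_map.
  have := congr1 (fun q => q^`().[0]) hp.
  rewrite /= deriv_comp hornerM horner_comp derivN derivX hornerN hornerX oppr0.
  rewrite hornerN hornerC mulrN1 => h.
  have : p^`().[0] *+ 2 == 0 by rewrite mulr2n -{1}h addNr.
  by rewrite mulrn_eq0 /= => /eqP.
have := horner_map (horner_eval (0:C)) (dmu F) a%:P.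
rewrite /= horner_evalE hornerC => h.
transitivity ((map_poly (horner_eval (0:C)) (dmu F)).[a]); first by rewrite h.
rewrite (_ : map_poly _ _ = 0) ?horner0 //.
apply/polyP => i; rewrite coef_map /= /dmu coef_map_id0 ?deriv0 //.
by rewrite horner_evalE key coef0.
Qed.


Lemma nat_t1 i m : (i <= m)%N -> (4*(i*(m-i)) = m^2)%N -> (i.*2 = m)%N.
Proof. move=> h e. nia. Qed.
Lemma nat_t2 i m : (i < m)%N -> (i*(m-i) = 0)%N -> i = 0%N.
Proof. move=> h e. nia. Qed.

Lemma rr_nat k : (k <= l)%N -> rr k = (k * (l - k))%:R.
Proof. by move=> h; rewrite /rr natrM natrB. Qed.

Lemma hom_z0 x : hom_eval F x 0 0 = x ^+ l.
Proof.
rewrite hom_eval_y0 big_ord_recr /= big1 ?add0r => [|i _].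
  by rewrite subnn expr0 mulr1 leadG mul1r.
rewrite expr0n (_ : (l - i == 0)%N = false) ?mulr0 //.
by apply/negbTE; rewrite subn_eq0 -ltnNge ltn_ord.
Qed.

Lemma hom_zn x z : z != 0 -> hom_eval F x 0 z = z ^+ l * G.[x / z].
Proof.
move=> zn; rewrite hom_eval_y0 horner_coef sizeG mulr_sumr; apply: eq_bigr => i _.
have hi : (i <= l)%N by rewrite -ltnS ltn_ord.
rewrite expr_div_n (_ : z ^+ l = z ^+ (l - i) * z ^+ i); last by rewrite -exprD subnK.
have zi : z ^+ i != 0 by rewrite expf_neq0.
field.
by [].
Qed.

Lemma Groot x : G.[x] = \prod_(i < l) (x - rr i).
Proof. by rewrite G_prod horner_prod; apply: eq_bigr => i _; rewrite hornerXsubC. Qed.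

Lemma part1 x z : (x != 0) || (z != 0) ->
  (hom_eval F x 0 z = 0 <->
   (z != 0 /\ exists2 k : nat, (k < l)%N & x / z = rr k)).
Proof.
move=> hxz; have [ez|zn] := eqVneq z 0.
  rewrite ez eqxx orbF in hxz; rewrite ez hom_z0; split => [/eqP|[]].
    by rewrite expf_eq0 (negbTE hxz) andbF.
  by [].
rewrite hom_zn // Groot; split.
  move/eqP; rewrite mulf_eq0 expf_eq0 (negbTE zn) andbF /= => /prodf_eq0 [i _ /eqP h].
  split=> //; exists i; first exact: ltn_ord.
  by apply/eqP; rewrite -subr_eq0 h.
case=> _ [k hk e]; apply/eqP; rewrite mulf_eq0; apply/orP; right.
by apply/prodf_eq0; exists (Ordinal hk) => //=; rewrite e subrr.
Qed.

Lemma Ga k : (k < l)%N -> G.[rr k] = 0.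
Proof. by move=> hk; rewrite Groot; apply/eqP/prodf_eq0; exists (Ordinal hk) => //; rewrite subrr. Qed.

Lemma sing k : (k < l)%N -> (0 < k)%N -> (k.*2 != l) -> G^`().[rr k] = 0.
Proof.
move=> hk k0 k2.
have hk' : (l - k < l)%N by lia.
pose k' := Ordinal hk'.
have ne : k' != Ordinal hk by apply/eqP => [[]]; lia.
have e : rr (l - k) = rr k by rewrite /rr natrB ?(ltnW hk) //; ring.
rewrite G_prod (bigD1 (Ordinal hk)) //= (bigD1 k') /=; last by rewrite ne.
rewrite e derivM hornerD !hornerM !hornerXsubC subrr.
by rewrite !(mul0r, mulr0, add0r, addr0).
Qed.

Lemma reg k : (k < l)%N -> (forall i, (i < l)%N -> rr i = rr k -> i = k) ->
  G^`().[rr k] != 0.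
Proof.
move=> hk u.
rewrite G_prod (bigD1 (Ordinal hk)) //= derivM hornerD !hornerM hornerXsubC subrr.
rewrite mul0r addr0 derivXsubC hornerC mul1r horner_prod.
apply/prodf_neq0 => i ne; rewrite hornerXsubC subr_eq0; apply/eqP => e.
by move: ne; rewrite -val_eqE /= (u i (ltn_ord i) (esym e)) eqxx.
Qed.

End Main.

Theorem proposition1p11 (C : numClosedFieldType) (l : nat) (hl : (0 < l)%N) :
  (forall x z : C, (x != 0) || (z != 0) ->
     (hom_eval (Fl C l) x 0 z = 0 <->
      (z != 0 /\ exists2 k : nat, (k < l)%N &
          x / z = k%:R * (l%:R - k%:R)))) /\
  (forall k : nat, (k < l)%N ->
     let a : C := k%:R * (l%:R - k%:R) in
     (a != 0 /\ ~ (~~ odd l /\ a = (l ^ 2)%:R / 4) -> singular_pt (Fl C l) a 0) /\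
     (a = 0 \/ (~~ odd l /\ a = (l ^ 2)%:R / 4) ->
        meets_mu0_orthogonally (Fl C l) a)).
Proof.
split; first exact: (@part1 C l).
move=> k hk; cbv zeta.
change (k%:R * (l%:R - k%:R) : C) with (@rr C l k).
have hFa : (Fl C l).[@rr C l k, 0] = 0 by rewrite (@FeqG C l) (@Ga C l).
split.
  case=> an0 nq.
  have k0 : (0 < k)%N.
    by move: an0; rewrite /rr; case: (k) => //; rewrite mul0r eqxx.
  have k2 : k.*2 != l.
    apply/eqP => e; apply: nq; split; first by rewrite -e odd_double.
    rewrite /rr -e -muln2 natrM natrX.
    have h4 : (4 : C) != 0 by rewrite pnatr_eq0.
    field.
    done.
  split; first exact: hFa.
    by rewrite (@dlam C l); apply: (@sing C l).
  exact: (@dmu0 C l).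
move=> h.
have hk' := ltnW hk.
have uq : forall i, (i < l)%N -> @rr C l i = @rr C l k -> i = k.
  move=> i hi; have hi' := ltnW hi.
  rewrite (@rr_nat C l i hi') (@rr_nat C l k hk') => /eqP; rewrite eqr_nat => /eqP e.
  case: h => [h|[_ h]].
    move: h; rewrite (@rr_nat C l k hk') => /eqP; rewrite pnatr_eq0 => /eqP h.
    have hi0 : (i * (l - i) = 0)%N by rewrite e.
    by rewrite (nat_t2 hk h) (nat_t2 hi hi0).
  have e4 : (4 * (k * (l - k)) = l ^ 2)%N.
    apply/eqP; rewrite -(@eqr_nat C) natrM -(@rr_nat C l k hk') h.
    have h4 : (4 : C) != 0 by rewrite pnatr_eq0.
    apply/eqP; field.
    done.
  have := nat_t1 (ltnW hk) e4; rewrite -e in e4.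
  have := nat_t1 (ltnW hi) e4; lia.
split.
  split; first exact: hFa.
  case=> _ hd _.
  by move: (@reg C l k hk uq); rewrite -(@dlam C l) hd eqxx.
by rewrite (@dmu0 C l) oppr0 mul0r mulr0 addr0.
Qed.
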